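(* Let $G=(V,E)$ be a finite simple undirected graph with zipper constraint collection $\mathcal{Z}$, let $D\subseteq Z^2$, and let $\mathbb{S}\subseteq D$ be a prescription on $D$. Suppose $\mathcal{K}=\{K_1,\dots,K_m\}$ is a clique cover of $G$ that is faithful to $\mathbb{S}$. Then the collection $\mathcal{K}^+=\{\mathrm{expand}(K):K\in\mathcal{K}\}$ is a clique cover of the augmented graph $G^+(\mathbb{S})$.
   Context: A clique cover of a graph is a collection of cliques whose union is the whole vertex set. A zipper constraint collection for $G$ is a finite set $\mathcal{Z}=\{(U_1,W_1,y_1),\dots,(U_m,W_m,y_m)\}$, where each $U_i,W_i\in E$ is an edge (a 2-element subset of $V$) and each $y_i$ is a label. Let $Z^2=\{U_1,\dots,U_m,W_1,\dots,W_m\}$. A prescription on $D\subseteq Z^2$ is a subset $\mathbb{S}\subseteq D$; the elements of $D\setminus\mathbb{S}$ are off pairs. A clique cover $\mathcal{K}$ of $G$ is faithful to $\mathbb{S}$ if (1) every $P\in\mathbb{S}$ is contained in some clique of $\mathcal{K}$, and (2) no $P\in D\setminus\mathbb{S}$ is contained in any clique of $\mathcal{K}$. Let $G'=(V,E\setminus(D\setminus\mathbb{S}))$. The augmented graph $G^+(\mathbb{S})=(V^+,E^+)$ has vertex set $V^+=\{[u]:u\in V\}\cup\{[u,w]:\{u,w\}\in\mathbb{S}\}$. Each vertex $[A]$ is a new formal vertex labeled by $A$, which is a singleton or a pair. Two distinct vertices $[A],[B]$ are adjacent if and only if $A\cup B$ is a clique in $G'$. For $T\subseteq V$, its expansion is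 $\mathrm{expand}(T)=\{[A]\in V^+ : A\subseteq T\}$. *)

(* Defs.v *)
(* finite simple graphs as symmetric irreflexive relations on a finType. *)
From mathcomp Require Import all_boot.
Set Implicit Arguments. Unset Strict Implicit. Unset Printing Implicit Defensive.

Section Defs.
Variable T : finType.
Variable e : rel T.

Definition is_edge (P : {set T}) : bool :=
  [exists x, exists y, [&& x != y, e x y & P == [set x; y]]].

Definition is_clique (K : {set T}) : bool :=
  [forall x in K, forall y in K, (x != y) ==> e x y].

Definition is_clique_cover (KK : {set {set T}}) : bool :=
  [forall K in KK, is_clique K] && (\bigcup_(K in KK) K == [set: T]).

Definition zipper_collection (L : Type) (Z : seq ({set T} * {set T} * L)) : bool :=
  all (fun z => is_edge z.1.1 && is_edge z.1.2) Z.

Definition Z2 (L : Type) (Z : seq ({set T} * {set T} * L)) : {set {set T}} :=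
  [set P | has (fun z => (P == z.1.1) || (P == z.1.2)) Z].

Definition faithful (D S : {set {set T}}) (KK : {set {set T}}) : Prop :=
  (forall P, P \in S -> exists2 K, K \in KK & P \subset K) /\
  (forall P, P \in D :\: S -> forall K, K \in KK -> ~~ (P \subset K)).

Definition adj' (D S : {set {set T}}) (x y : T) : bool :=
  e x y && ([set x; y] \notin D :\: S).

Definition is_clique' (D S : {set {set T}}) (K : {set T}) : bool :=
  [forall x in K, forall y in K, (x != y) ==> adj' D S x y].

(* Vertex set V^+ of the augmented graph: [u] for u in V, and [u,w] for {u,w} in S.
   A vertex [A] is represented by its label A : {set T}. *)
Definition Vplus (S : {set {set T}}) : {set {set T}} :=
  [set A | [exists u, A == [set u]] || (A \in S)].

Definition adjplus (D S : {set {set T}}) (A B : {set T}) : bool :=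
  (A != B) && is_clique' D S (A :|: B).

Definition is_clique_plus (D S : {set {set T}}) (X : {set {set T}}) : bool :=
  (X \subset Vplus S) &&
  [forall A in X, forall B in X, (A != B) ==> adjplus D S A B].

Definition is_clique_cover_plus (D S : {set {set T}}) (KK : {set {set {set T}}}) : bool :=
  [forall X in KK, is_clique_plus D S X] && (\bigcup_(X in KK) X == Vplus S).

Definition expand (S : {set {set T}}) (K : {set T}) : {set {set T}} :=
  [set A in Vplus S | A \subset K].

End Defs.

(* Main.v *)
Require Import Defs.
From mathcomp Require Import all_boot.

Theorem mainTheorem3 (T : finType) (e : rel T)
  (e_sym : symmetric e) (e_irr : irreflexive e)
  (L : Type) (Z : seq ({set T} * {set T} * L)) (HZ : zipper_collection e Z)
  (D S : {set {set T}}) (HD : D \subset Z2 Z) (HS : S \subset D)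
  (KK : {set {set T}}) (Hcover : is_clique_cover e KK) (Hfaith : faithful D S KK) :
  is_clique_cover_plus e D S [set expand S K | K in KK].
Proof.
case/andP: Hcover => /forallP Hcl /eqP Hun.
case: Hfaith => Hin Hoff.
apply/andP; split.
  apply/forallP => X; apply/implyP => /imsetP [K HK ->].
  apply/andP; split.
    by apply/subsetP => A; rewrite inE => /andP [].
  apply/forallP => A; apply/implyP; rewrite inE => /andP [_ HA].
  apply/forallP => B; apply/implyP; rewrite inE => /andP [_ HB].
  apply/implyP => HAB; rewrite /adjplus HAB /=.
  have HABK : A :|: B \subset K by rewrite subUset HA HB.
  have /implyP := Hcl K; rewrite HK => /(_ isT) /forallP Hc.
  apply/forallP => x; apply/implyP => Hx; apply/forallP => y; apply/implyP => Hy.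
  apply/implyP => Hxy.
  have HxK := subsetP HABK _ Hx; have HyK := subsetP HABK _ Hy.
  have := Hc x; rewrite HxK /= => /forallP /(_ y); rewrite HyK Hxy /= => Hexy.
  rewrite /adj' Hexy /=.
  apply/negP => Hd.
  have := Hoff _ Hd K HK.
  by rewrite subUset !sub1set HxK HyK.
apply/eqP/setP => A; apply/idP/idP.
  case/bigcupP => X /imsetP [K HK ->]; rewrite inE => /andP [].
  by [].
move=> HA; have HA' := HA; rewrite inE in HA'.
case/orP: HA' => [/existsP [u /eqP HAu] | HAS].
  have : u \in \bigcup_(K in KK) K by rewrite Hun inE.
  case/bigcupP => K HK Hu.
  apply/bigcupP; exists (expand S K); first by apply/imsetP; exists K.
  by rewrite inE HA HAu sub1set Hu.
have [K HK HAK] := Hin _ HAS.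
apply/bigcupP; exists (expand S K); first by apply/imsetP; exists K.
by rewrite inE HA HAK.
Qed.
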